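(* Let $n\ge 3$, let $F$ be a set of edges of $Q_n$, and let $B$ be a set of edges of $Q_n$ not in $F$ such that every Hamiltonian cycle of $Q_n-F$ contains every edge of $B$. Fix a dimension $i$, and let $f_i^e$ (resp. $f_i^o$) be the number of even (resp. odd) crossing edges of dimension $i$ that lie in $F$, and $b_i^e$ (resp. $b_i^o$) the number of even (resp. odd) crossing edges of dimension $i$ that lie in $B$. Then: (1) if $f_i^e=2^{n-2}$ or $f_i^o=2^{n-2}$, then $Q_n-F$ has no Hamiltonian cycle; (2) if $f_i^e+b_i^o>2^{n-2}$ or $f_i^o+b_i^e>2^{n-2}$, then $Q_n-F$ has no Hamiltonian cycle; (3) if $f_i^e+b_i^o=2^{n-2}$, then every Hamiltonian cycle of $Q_n-F$ contains every even crossing edge of dimension $i$ not in $F$, and every odd crossing edge of dimension $i$ contained in a Hamiltonian cycle of $Q_n-F$ belongs to $B$; (4) if $f_i^o+b_i^e=2^{n-2}$, then every Hamiltonian cycle of $Q_n-F$ contains every odd crossing edge of dimension $i$ not in $F$, and every even crossing edge of dimension $i$ contained in a Hamiltonian cycle of $Q_n-F$ belongs to $B$; (5) if $f_i^e=2^{n-2}-1$ (resp. $f_i^o=2^{n-2}-1$), then the unique even (resp. odd) crossing edge of dimension $i$ not in $F$ belongs to every Hamiltonian cycle of $Q_n-F$.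
   Context: $Q_n$ is the $n$-dimensional hypercube on the binary strings $x=x_{n-1}\dots x_0$, two strings adjacent iff they differ in exactly one bit; $x^{(i)}$ denotes $x$ with bit $i$ flipped. The parity of a vertex is the number of ones in its label modulo 2. $F$ is a set of ''faulty'' edges and $Q_n-F$ is the graph on all vertices of $Q_n$ with the edges of $Q_n$ not in $F$. For a dimension $i$, let $Q^L=\{x:x_i=0\}$; the crossing edges of dimension $i$ are the $2^{n-1}$ edges $(u,u^{(i)})$ with $u\in Q^L$; such an edge is even if $u$ has parity 0 and odd if $u$ has parity 1 (so there are $2^{n-2}$ even and $2^{n-2}$ odd crossing edges). *)

(* Defs.v *)
From mathcomp Require Import all_boot.
Set Implicit Arguments. Unset Strict Implicit. Unset Printing Implicit Defensive.

Definition vert (n : nat) := {ffun 'I_n -> bool}.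

Definition flip n (x : vert n) (i : 'I_n) : vert n :=
  [ffun j => if j == i then ~~ x j else x j].

Definition parity n (x : vert n) : bool := odd #|[set j | x j]|.

(* an (undirected) edge is the 2-element set of its endpoints *)
Definition Qedges n : {set {set vert n}} :=
  [set [set x; flip x i] | x : vert n, i : 'I_n].

Definition adjF n (F : {set {set vert n}}) (x y : vert n) : bool :=
  [exists i, y == flip x i] && ([set x; y] \notin F).

(* Hamiltonian cycle of Q_n - F, given as the cyclic sequence of its vertices *)
Definition HamCycle n (F : {set {set vert n}}) (c : seq (vert n)) : Prop :=
  [/\ uniq c, forall x : vert n, x \in c & cycle (adjF F) c].

Definition cycle_edges n (c : seq (vert n)) : {set {set vert n}} :=
  [set [set x; next c x] | x in c].

(* crossing edges of dimension i, even / odd according to the endpoint with x_i = 0 *)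
Definition even_cross n (i : 'I_n) : {set {set vert n}} :=
  [set [set u; flip u i] | u : vert n & (u i == false) && ~~ parity u].
Definition odd_cross n (i : 'I_n) : {set {set vert n}} :=
  [set [set u; flip u i] | u : vert n & (u i == false) && parity u].

Definition hamiltonian n (F : {set {set vert n}}) : Prop :=
  exists c, HamCycle F c.

(* Main.v *)
Require Import Defs.
From mathcomp Require Import all_boot zify.
Set Implicit Arguments. Unset Strict Implicit. Unset Printing Implicit Defensive.

Section Basic.
Variable n : nat.
Implicit Types (x y u v : vert n) (j k : 'I_n).

Lemma flipE x j k : flip x j k = if k == j then ~~ x k else x k.
Proof. by rewrite /flip ffunE. Qed.

Lemma flip_at x j : flip x j j = ~~ x j.
Proof. by rewrite flipE eqxx. Qed.

Lemma flip_off x j k : k != j -> flip x j k = x k.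
Proof. by rewrite flipE => /negbTE ->. Qed.

Lemma flipK j : involutive (fun x : vert n => flip x j).
Proof. by move=> x; apply/ffunP => k; rewrite !flipE; case: eqP => // _; rewrite negbK. Qed.

Lemma flip_inj j : injective (fun x : vert n => flip x j).
Proof. exact: inv_inj (@flipK j). Qed.

Lemma flip_neq x j : flip x j != x.
Proof. by apply/eqP => /(congr1 (fun f : vert n => f j)); rewrite flip_at; case: (x j). Qed.

Lemma parity_flip x j : parity (flip x j) = ~~ parity x.
Proof.
rewrite /parity.
case Hx: (x j).
- have -> : [set k | flip x j k] = [set k | x k] :\ j.
    apply/setP => k; rewrite !inE flipE; case: eqP => [->|_]; by rewrite ?Hx.
  by rewrite [#|[set k | x k]|](cardsD1 j) inE Hx /= negbK.
- have -> : [set k | flip x j k] = j |: [set k | x k].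
    apply/setP => k; rewrite !inE flipE; case: eqP => [->|_]; by rewrite ?Hx.
  by rewrite cardsU1 inE Hx.
Qed.

Lemma flip_neq2 x j k : j != k -> flip x j != flip x k.
Proof.
move=> ne; apply/eqP => /(congr1 (fun f : vert n => f j)).
by rewrite flip_at flip_off //; case: (x j).
Qed.

End Basic.

Lemma path_prop (T : eqType) (e : rel T) (P : pred T) x p :
  (forall a b, e a b -> P a -> P b) -> path e x p -> P x -> all P p.
Proof.
move=> He; elim: p x => //= y p IH x /andP[exy pp] Px.
have Py := He _ _ exy Px; by rewrite Py (IH y).
Qed.


Section Dim.
Variables (n : nat) (i : 'I_n).
Implicit Types (x y u v : vert n) (j k : 'I_n) (p q : bool).

Definition g u : {set vert n} := [set u; flip u i].
Definition L p := [set u : vert n | (u i == false) && (parity u == p)].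
Definition H := [set u : vert n | u i == false].

Lemma LH p : L p \subset H.
Proof. by apply/subsetP => u; rewrite !inE => /andP[]. Qed.

Lemma g_inj : {in H &, injective g}.
Proof.
move=> u v; rewrite !inE => /eqP Hu /eqP Hv Eg.
have : u \in g v by rewrite -Eg !inE eqxx.
rewrite !inE => /orP[/eqP //|/eqP E].
by move: Hu; rewrite E flip_at Hv.
Qed.

Lemma part q u j : u \in L q ->
  (flip u j \in L (~~ q)) = ~~ (flip u j == flip u i).
Proof.
rewrite !inE => /andP[/eqP Hu /eqP Hp].
case: (eqVneq j i) => [->|ne].
  by rewrite flip_at Hu eqxx.
rewrite flip_off ?Hu; last by rewrite eq_sym.
rewrite parity_flip Hp !eqxx /=.
apply/esym/negP => /eqP /(congr1 (fun f : vert n => f i)).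
by rewrite flip_at flip_off ?Hu // eq_sym.
Qed.

Lemma even_crossE : even_cross i = g @: L false.
Proof.
apply/setP => e; apply/imsetP/imsetP => [][u Hu ->]; exists u => //;
  move: Hu; rewrite !inE; by case: (parity u); rewrite ?andbF ?andbT.
Qed.

Lemma odd_crossE : odd_cross i = g @: L true.
Proof.
apply/setP => e; apply/imsetP/imsetP => [][u Hu ->]; exists u => //;
  move: Hu; rewrite !inE; by case: (parity u); rewrite ?andbF ?andbT.
Qed.

Lemma card_g (S : {set {set vert n}}) p :
  #|S :&: g @: L p| = #|L p :&: [set u | g u \in S]|.
Proof.
have -> : S :&: g @: L p = g @: (L p :&: [set u | g u \in S]).
  apply/setP => e; apply/setIP/imsetP => [[He /imsetP[u Hu E]]|[u]].
    by exists u => //; rewrite inE Hu inE -E.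
  by move=> /setIP[Hu]; rewrite inE => Hg ->; split => //; apply: imset_f.
apply: card_in_imset => u v; rewrite !inE => /andP[Hu _] /andP[Hv _].
by apply: g_inj => //; rewrite inE; [case/andP: Hu | case/andP: Hv].
Qed.

Hypothesis hn : 3 <= n.

Lemma exists_other : exists j : 'I_n, j != i.
Proof.
have h0 : 0 < n by lia.
have h1 : 1 < n by lia.
case: (eqVneq (Ordinal h0) i) => [E|ne]; last by exists (Ordinal h0).
exists (Ordinal h1); apply/negP => /eqP E1; move: E; rewrite -E1 => /(congr1 val) //.
Qed.

Lemma Lle p : #|L p| <= #|L (~~ p)|.
Proof.
have [j ne] := exists_other.
rewrite -(card_imset (L p) (@flip_inj n j)).
apply: subset_leq_card; apply/subsetP => v /imsetP[u Hu ->].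
by rewrite part // flip_neq2.
Qed.

Lemma Leq p : #|L p| = #|L (~~ p)|.
Proof. by apply/eqP; rewrite eqn_leq Lle /= -{2}(negbK p) Lle. Qed.

Lemma cardH : #|H| + #|H| = 2 ^ n.
Proof.
have -> : 2 ^ n = #|vert n| by rewrite card_ffun card_bool card_ord.
rewrite -(cardsC H); congr (_ + _).
rewrite -(card_imset H (@flip_inj n i)); apply: eq_card => v.
apply/imsetP/idP => [[u Hu ->]|Hv].
  by move: Hu; rewrite !inE flip_at => /eqP ->.
exists (flip v i); last by rewrite flipK.
by move: Hv; rewrite !inE flip_at; case: (v i).
Qed.

Lemma Lcard p : #|L p| = 2 ^ (n - 2).
Proof.
have E1 : #|L true| + #|L false| = #|H|.
  rewrite -(cardsID [set u : vert n | parity u] H); congr (_ + _);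
  apply: eq_card => u; rewrite !inE; by case: (parity u); rewrite ?andbT ?andbF.
have E2 := cardH.
have E3 := Leq true; rewrite /= in E3.
have E4 : 2 ^ n = 4 * 2 ^ (n - 2).
  by rewrite -{1}(subnK (ltnW hn)) expnD mulnC.
case: p; move: E1 E2 E3 E4; move: (#|L true|) (#|L false|) (#|H|) (2^n) (2^(n-2)) => x y z a b; lia.
Qed.

Section Cyc.
Variables (F : {set {set vert n}}) (c : seq (vert n)).
Hypothesis Hc : HamCycle F c.

Let Uc : uniq c. Proof. by case: Hc. Qed.
Let Allc x : x \in c. Proof. by case: Hc. Qed.
Let Cyc : cycle (adjF F) c. Proof. by case: Hc. Qed.

Lemma adjN x : exists j, next c x = flip x j.
Proof.
have := next_cycle Cyc (Allc x); rewrite /adjF => /andP[/existsP[j /eqP E] _].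
by exists j.
Qed.

Lemma notF x : [set x; next c x] \notin F.
Proof. by have := next_cycle Cyc (Allc x); rewrite /adjF => /andP[]. Qed.

Lemma adjP x : exists j, prev c x = flip x j.
Proof.
have := prev_cycle Cyc (Allc x); rewrite /adjF => /andP[/existsP[j /eqP E] _].
by exists j; rewrite {2}E flipK.
Qed.

Lemma next_neq x : next c x != x.
Proof. by have [j ->] := adjN x; apply: flip_neq. Qed.

Lemma size_c : 3 <= size c.
Proof.
have h1 : #|vert n| <= size c.
  move/card_uniqP: Uc => <-; apply: subset_leq_card; apply/subsetP => x _.
  exact: Allc.
have h2 : 2 ^ 3 <= #|vert n|.
  by rewrite card_ffun card_bool card_ord leq_exp2l.
move: h1 h2; move: (#|vert n|) => m; rewrite (_ : 2 ^ 3 = 8) //; lia.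
Qed.

Lemma nn x : next c (next c x) != x.
Proof.
case/rot_to: (Allc x) => k s E.
have Ur : uniq (x :: s) by rewrite -E rot_uniq.
have Sz : 2 <= size s.
  have := size_c; rewrite -(size_rot k) E /=; move: (size s) => m; lia.
case: s E Ur Sz => [|y [|z t]] // E Ur _.
have xy : y != x by apply/eqP => E'; move: Ur; rewrite E' /= inE eqxx.
have Exy : next (x :: y :: z :: t) x = y by rewrite /= eqxx.
have Eyz : next (x :: y :: z :: t) y = z by rewrite /= (negbTE xy) eqxx.
rewrite -!(next_rot k Uc) E Exy Eyz.
apply/eqP => ez; move: Ur; rewrite ez /= !inE; by rewrite eqxx !orbT.
Qed.

Lemma key u :
  (g u \in cycle_edges c) = (next c u == flip u i) || (prev c u == flip u i).
Proof.
apply/idP/idP.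
  move/imsetP => [x _ E].
  have hx : x \in g u by rewrite E !inE eqxx.
  have hy : next c x \in g u by rewrite E !inE eqxx orbT.
  have nx := next_neq x.
  move: hx; rewrite !inE => /orP[/eqP ex | /eqP ex].
    by move: hy nx; rewrite ex !inE => /orP[/eqP ->|->] // /eqP.
  move: hy nx; rewrite ex !inE => /orP[/eqP ey|/eqP ey] nx; last by move: nx; rewrite ey => /eqP.
  by apply/orP; right; apply/eqP; rewrite -{1}ey (prev_next Uc).
case/orP => /eqP E.
  by apply/imsetP; exists u => //; rewrite /g E.
apply/imsetP; exists (prev c u) => //; rewrite (next_prev Uc) /g E.
by rewrite setUC.
Qed.

Lemma disj u : ~~ ((next c u == flip u i) && (prev c u == flip u i)).
Proof.
apply/negP => /andP[/eqP E1 /eqP E2].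
have : next c (next c u) == u by rewrite E1 -E2 (next_prev Uc).
by rewrite (negbTE (nn u)).
Qed.


Definition Used p := L p :&: [set u | g u \in cycle_edges c].
Definition An p := L p :&: [set u | next c u == flip u i].
Definition Bp p := L p :&: [set u | prev c u == flip u i].

Lemma cardUsed p : #|Used p| = #|An p| + #|Bp p|.
Proof.
have -> : Used p = An p :|: Bp p.
  by apply/setP => u; rewrite !in_setU !in_setI !in_set key andb_orr.
rewrite cardsU.
have -> : An p :&: Bp p = set0.
  apply/setP => u; rewrite !in_setI !in_set ?in_set0; move: (disj u).
  by case: (next c u == flip u i); case: (prev c u == flip u i); rewrite ?andbF ?andbT.
by rewrite cards0 subn0.
Qed.

Lemma AB p : #|An p| = #|Bp (~~ p)|.
Proof.
have e1 := cardsID [set u | next c u \in L (~~p)] (L p).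
have e2 := cardsID [set y | prev c y \in L p] (L (~~p)).
have d1 : L p :\: [set u | next c u \in L (~~p)] = An p.
  apply/setP => u; rewrite in_setD !in_setI; case Hu: (u \in L p); rewrite ?andbF ?andbT //.
  have [j E] := adjN u; rewrite !in_set E; move: (part j Hu); rewrite !in_set => ->; by rewrite negbK.
have d2 : L (~~p) :\: [set y | prev c y \in L p] = Bp (~~p).
  apply/setP => u; rewrite in_setD !in_setI; case Hu: (u \in L (~~p)); rewrite ?andbF ?andbT //.
  have [j E] := adjP u; rewrite !in_set E; move: (part j Hu); rewrite negbK !in_set => ->; by rewrite negbK.
have d3 : next c @: (L p :&: [set u | next c u \in L (~~p)]) =
          L (~~p) :&: [set y | prev c y \in L p].
  apply/setP => y; apply/imsetP/idP.
    move=> [u /setIP[H1 H2] ->]; rewrite in_set in H2.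
    by rewrite in_setI H2 /= in_set (prev_next Uc).
  move=> /setIP[H1 H2]; rewrite in_set in H2; exists (prev c y); last by rewrite (next_prev Uc).
  by rewrite in_setI H2 /= in_set (next_prev Uc).
have d4 := card_imset (L p :&: [set u | next c u \in L (~~p)]) (can_inj (prev_next Uc)).
rewrite d3 in d4; rewrite d1 in e1; rewrite d2 in e2.
have l1 := Lcard p; have l2 := Lcard (~~p).
move: e1 e2 d4 l1 l2.
move: (#|An p|) (#|Bp (~~p)|) (#|L p|) (#|L (~~p)|) (#|L (~~ p) :&: [set y | prev c y \in L p]|)
  (#|L p :&: [set u | next c u \in L (~~ p)]|) (2 ^ (n-2)) => a b x y z w k.
lia.
Qed.

Lemma Used_eq : #|Used false| = #|Used true|.
Proof.
rewrite !cardUsed (AB false) (AB true) /=.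
move: (#|Bp true|) (#|Bp false|) => a b; lia.
Qed.

Lemma cross : exists u : vert n, (u i == false) && (next c u == flip u i).
Proof.
case: (boolP [exists u : vert n, (u i == false) && (next c u == flip u i)]) => [/existsP//|].
rewrite negb_exists => /forallP Hall.
have Hs : forall u, (u i == false) ==> (next c u i == false).
  move=> u; apply/implyP => /eqP Hu; have [j E] := adjN u.
  have := Hall u; rewrite Hu E eqxx /=.
  case: (eqVneq j i) => [->|ne]; first by rewrite eqxx.
  by rewrite flip_off ?Hu // eq_sym.
set u0 : vert n := [ffun _ => false].
case/rot_to: (Allc u0) => k s E.
have Cy : cycle (fun x y : vert n => (x i == false) ==> (y i == false)) (u0 :: s).
  rewrite -E rot_cycle; apply: sub_cycle (cycle_next Uc) => x y /eqP <-; exact: Hs.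
have Al : all (fun y : vert n => y i == false) (rcons s u0).
  apply: (path_prop _ Cy); last by rewrite ffunE.
  by move=> a b /implyP.
have : flip u0 i \in u0 :: s by rewrite -E mem_rot.
rewrite inE (negbTE (flip_neq _ _)) /= => Hin.
move/allP: Al => /(_ (flip u0 i)); rewrite mem_rcons inE Hin orbT flip_at ffunE.
by move=> /(_ isT).
Qed.

Lemma Used_pos p : 0 < #|Used p|.
Proof.
have [u /andP[Hu En]] := cross.
have Uu : u \in Used (parity u).
  by rewrite in_setI !in_set Hu eqxx /= key En.
have : 0 < #|Used (parity u)| by apply/card_gt0P; exists u.
have := Used_eq; case: p; case: (parity u); lia.
Qed.

Lemma Used_notF p u : u \in Used p -> g u \notin F.
Proof.
case/setIP => _; rewrite in_set => /imsetP[x _ ->]; exact: notF.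
Qed.

End Cyc.

Lemma main_p (F B : {set {set vert n}})
  (hBham : forall c, HamCycle F c -> B \subset cycle_edges c) p :
  let f := #|F :&: g @: L p| in let b := #|B :&: g @: L (~~p)| in
  [/\ f = 2^(n-2) -> ~ hamiltonian F,
      f + b > 2^(n-2) -> ~ hamiltonian F,
      f + b = 2^(n-2) ->
        (forall c, HamCycle F c -> g @: L p :\: F \subset cycle_edges c) /\
        (forall e, e \in g @: L (~~p) ->
           (exists c, HamCycle F c /\ e \in cycle_edges c) -> e \in B)
    & f = 2^(n-2) - 1 -> forall e, e \in g @: L p :\: F ->
        forall c, HamCycle F c -> e \in cycle_edges c].
Proof.
rewrite /= !card_g.
set S := [set u | g u \in F]; set Bq := L (~~p) :&: [set u | g u \in B].
set D := L p :\: S.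
have eD : #|L p :&: S| + #|D| = 2 ^ (n - 2) by rewrite cardsID Lcard.
have hD : forall c, HamCycle F c -> Used c p \subset D.
  move=> c Hc; apply/subsetP => u Hu; rewrite in_setD in_set (Used_notF Hc Hu).
  by case/setIP: Hu.
have hBU : forall c, HamCycle F c -> Bq \subset Used c (~~p).
  move=> c Hc; apply/subsetP => u /setIP[Hu]; rewrite in_set => Hg.
  rewrite in_setI Hu in_set; exact: (subsetP (hBham c Hc)).
have hE : forall c, HamCycle F c -> #|Used c p| = #|Used c (~~p)|.
  by move=> c Hc; have E := Used_eq Hc; case: (p) => /=; rewrite E.
have hP : forall c, HamCycle F c -> 0 < #|Used c p| by move=> c Hc; exact: (Used_pos Hc).
have hK : 0 < 2 ^ (n - 2) by rewrite expn_gt0.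
split.
- move=> Ef [c Hc]; have := subset_leq_card (hD c Hc); have := hP c Hc.
  move: eD Ef; move: (#|L p :&: S|) (#|D|) (#|Used c p|) (2 ^ (n-2)) => a b x k; lia.
- move=> Gt [c Hc]; have := subset_leq_card (hD c Hc); have := subset_leq_card (hBU c Hc).
  have := hE c Hc.
  move: eD Gt; move: (#|L p :&: S|) (#|D|) (#|Used c p|) (#|Used c (~~p)|) (#|Bq|) (2 ^ (n-2)) => a b x y z k; lia.
- move=> Eq; split.
    move=> c Hc.
    have eq1 : Used c p = D.
      apply/eqP; rewrite eqEcard hD //=.
      have := subset_leq_card (hBU c Hc); have := hE c Hc.
      move: eD Eq; move: (#|L p :&: S|) (#|D|) (#|Used c p|) (#|Used c (~~p)|) (#|Bq|) (2 ^ (n-2)) => a b x y z k; lia.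
    apply/subsetP => e /setDP[/imsetP[u Hu ->] HF].
    have : u \in D by rewrite in_setD in_set HF.
    by rewrite -eq1 => /setIP[_]; rewrite in_set.
  move=> e /imsetP[u Hu ->] [c [Hc Hec]].
  have eq2 : Bq = Used c (~~p).
    apply/eqP; rewrite eqEcard hBU //=.
    have := subset_leq_card (hD c Hc); have := hE c Hc.
    move: eD Eq; move: (#|L p :&: S|) (#|D|) (#|Used c p|) (#|Used c (~~p)|) (#|Bq|) (2 ^ (n-2)) => a b x y z k; lia.
  have : u \in Used c (~~p) by rewrite in_setI Hu in_set.
  by rewrite -eq2 => /setIP[_]; rewrite in_set.
- move=> Ef e /setDP[/imsetP[u Hu ->] HF] c Hc.
  have eq1 : Used c p = D.
    apply/eqP; rewrite eqEcard hD //=.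
    have := hP c Hc.
    move: eD Ef; move: (#|L p :&: S|) (#|D|) (#|Used c p|) (2 ^ (n-2)) => a b x k; lia.
  have : u \in D by rewrite in_setD in_set HF.
  by rewrite -eq1 => /setIP[_]; rewrite in_set.
Qed.
End Dim.

Theorem lemma6 (n : nat) (hn : 3 <= n) (F B : {set {set vert n}})
  (hF : F \subset Qedges n) (hB : B \subset Qedges n :\: F)
  (hBham : forall c, HamCycle F c -> B \subset cycle_edges c)
  (i : 'I_n) :
  let fe := #|F :&: even_cross i| in
  let fo := #|F :&: odd_cross i| in
  let be := #|B :&: even_cross i| in
  let bo := #|B :&: odd_cross i| in
  [/\ (fe = 2 ^ (n - 2) \/ fo = 2 ^ (n - 2)) -> ~ hamiltonian F,
      (fe + bo > 2 ^ (n - 2) \/ fo + be > 2 ^ (n - 2)) -> ~ hamiltonian F,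
      fe + bo = 2 ^ (n - 2) ->
        (forall c, HamCycle F c -> even_cross i :\: F \subset cycle_edges c) /\
        (forall e, e \in odd_cross i ->
           (exists c, HamCycle F c /\ e \in cycle_edges c) -> e \in B),
      fo + be = 2 ^ (n - 2) ->
        (forall c, HamCycle F c -> odd_cross i :\: F \subset cycle_edges c) /\
        (forall e, e \in even_cross i ->
           (exists c, HamCycle F c /\ e \in cycle_edges c) -> e \in B)
    & (fe = 2 ^ (n - 2) - 1 ->
         forall e, e \in even_cross i :\: F ->
           forall c, HamCycle F c -> e \in cycle_edges c) /\
      (fo = 2 ^ (n - 2) - 1 ->
         forall e, e \in odd_cross i :\: F ->
           forall c, HamCycle F c -> e \in cycle_edges c)].
Proof.
move=> fe fo be bo.
have := main_p i hn hBham false; rewrite /= -even_crossE -odd_crossE => -[a1 a2 a3 a4].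
have := main_p i hn hBham true; rewrite /= -even_crossE -odd_crossE => -[b1 b2 b3 b4].
split.
- by case=> E; [exact: a1 | exact: b1].
- by case=> E; [exact: a2 | exact: b2].
- exact: a3.
- exact: b3.
- by split; [exact: a4 | exact: b4].
Qed.
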